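(* The category $\sigma\mathbb{RS}_u$ is isomorphic to the variety $\mathcal{V}_{\sigma\mathbb{RS}_u}$ via the functor $T_u$ that forgets $\bigvee^-$ (interpreting $1$ as the designated weak unit; identity on maps) and the functor $E_u$ that adds $\bigvee^-(g,f_1,f_2,\dots):=\sup_{n\ge1}\{f_n\wedge g\}$ and interprets $1$ as the designated weak unit (identity on maps); these are well defined and mutually inverse. In particular the category of Dedekind $\sigma$-complete Riesz spaces with weak unit is an infinitary variety.
   Context: A weak unit of a Riesz space $G$ is an element $1\ge0$ such that $f\wedge1=0$ implies $f=0$. $\sigma\mathbb{RS}_u$: Dedekind $\sigma$-complete Riesz spaces (every countable bounded-above subset has a supremum) with a designated weak unit, and Riesz morphisms preserving existing countable suprema and the designated unit. $\mathcal{V}_{\sigma\mathbb{RS}_u}$: algebras with the Riesz space operations, a countably infinitary operation $\bigvee^-$ (write $\bigvee_{n\ge1}^g f_n:=\bigvee^-(g,f_1,f_2,\dots)$) and a constant $1$, satisfying the Riesz space axioms, (A1) $\bigvee_{n\ge1}^g f_n=\bigvee_{n\ge1}^g(f_n\wedge g)$; (A2) $\bigvee_{n\ge1}^g f_n=(f_1\wedge g)\vee\bigvee^-(g,f_2,f_3,\dots)$; (A3) $\bigvee_{n\ge1}^g(f_n\wedge h)\le h$ ($a\le b$ meaning $a\wedge b=a$); and $\bigvee_{n\ge1}^{|f|}(|f|\wedge n1)=|f|$. Morphisms preserve all operations. *)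

(* Defs.v *)
From Stdlib Require Import Reals ClassicalEpsilon.
Open Scope R_scope.

Record RieszOps (G : Type) := {
  radd : G -> G -> G;
  ropp : G -> G;
  rzero : G;
  rscal : R -> G -> G;
  rmeet : G -> G -> G;
  rjoin : G -> G -> G }.
Arguments radd {G}. Arguments ropp {G}. Arguments rzero {G}.
Arguments rscal {G}. Arguments rmeet {G}. Arguments rjoin {G}.

Section RieszDefs.
Context {G : Type} (o : RieszOps G).

Definition rle (a b : G) : Prop := rmeet o a b = a.

Definition rabs (f : G) : G := rjoin o f (ropp o f).

Definition is_riesz : Prop :=
  (forall x y z, radd o x (radd o y z) = radd o (radd o x y) z) /\
  (forall x y, radd o x y = radd o y x) /\
  (forall x, radd o (rzero o) x = x) /\
  (forall x, radd o x (ropp o x) = rzero o) /\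
  (forall a x y, rscal o a (radd o x y) = radd o (rscal o a x) (rscal o a y)) /\
  (forall a b x, rscal o (a + b) x = radd o (rscal o a x) (rscal o b x)) /\
  (forall a b x, rscal o (a * b) x = rscal o a (rscal o b x)) /\
  (forall x, rscal o 1 x = x) /\
  (forall x y, rmeet o x y = rmeet o y x) /\
  (forall x y, rjoin o x y = rjoin o y x) /\
  (forall x y z, rmeet o x (rmeet o y z) = rmeet o (rmeet o x y) z) /\
  (forall x y z, rjoin o x (rjoin o y z) = rjoin o (rjoin o x y) z) /\
  (forall x y, rmeet o x (rjoin o x y) = x) /\
  (forall x y, rjoin o x (rmeet o x y) = x) /\
  (forall x y z, rle x y -> rle (radd o x z) (radd o y z)) /\
  (forall c x y, rle x y -> 0 <= c -> rle (rscal o c x) (rscal o c y)).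

Definition is_sup (f : nat -> G) (s : G) : Prop :=
  (forall n, rle (f n) s) /\ (forall b, (forall n, rle (f n) b) -> rle s b).

Definition dedekind_sigma_complete : Prop :=
  forall f : nat -> G, (exists b, forall n, rle (f n) b) -> exists s, is_sup f s.

Definition weak_unit (u : G) : Prop :=
  rle (rzero o) u /\ forall f, rmeet o f u = rzero o -> f = rzero o.
End RieszDefs.

Record RSu := { rs_car : Type; rs_ops : RieszOps rs_car; rs_unit : rs_car }.

Definition is_sRSu (X : RSu) : Prop :=
  is_riesz (rs_ops X) /\ dedekind_sigma_complete (rs_ops X) /\
  weak_unit (rs_ops X) (rs_unit X).

Definition riesz_morphism {G H : Type} (o : RieszOps G) (p : RieszOps H)
  (h : G -> H) : Prop :=
  (forall x y, h (radd o x y) = radd p (h x) (h y)) /\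
  (forall a x, h (rscal o a x) = rscal p a (h x)) /\
  (forall x y, h (rmeet o x y) = rmeet p (h x) (h y)) /\
  (forall x y, h (rjoin o x y) = rjoin p (h x) (h y)).

Definition sRSu_mor (X Y : RSu) (h : rs_car X -> rs_car Y) : Prop :=
  riesz_morphism (rs_ops X) (rs_ops Y) h /\
  (forall f s, is_sup (rs_ops X) f s -> is_sup (rs_ops Y) (fun n => h (f n)) (h s)) /\
  h (rs_unit X) = rs_unit Y.

(* Raw algebras of the signature of V_{sigma RS_u}.
   v_bv g f  stands for  \bigvee^-(g, f_1, f_2, ...)  with  f_{k+1} = f k. *)
Record VAlg := {
  v_car : Type; v_ops : RieszOps v_car;
  v_bv : v_car -> (nat -> v_car) -> v_car; v_one : v_car }.

Definition is_V (A : VAlg) : Prop :=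
  let o := v_ops A in let bv := v_bv A in
  is_riesz o /\
  (forall g f, bv g f = bv g (fun n => rmeet o (f n) g)) /\
  (forall g f, bv g f = rjoin o (rmeet o (f 0%nat) g) (bv g (fun n => f (S n)))) /\
  (forall g f h, rle o (bv g (fun n => rmeet o (f n) h)) h) /\
  (forall f, bv (rabs o f) (fun k => rmeet o (rabs o f) (rscal o (INR (S k)) (v_one A)))
             = rabs o f).

Definition V_mor (A B : VAlg) (h : v_car A -> v_car B) : Prop :=
  riesz_morphism (v_ops A) (v_ops B) h /\
  (forall x, h (ropp (v_ops A) x) = ropp (v_ops B) (h x)) /\
  h (rzero (v_ops A)) = rzero (v_ops B) /\
  (forall g f, h (v_bv A g f) = v_bv B (h g) (fun n => h (f n))) /\
  h (v_one A) = v_one B.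

Definition Tu (A : VAlg) : RSu :=
  {| rs_car := v_car A; rs_ops := v_ops A; rs_unit := v_one A |}.

Definition Eu (X : RSu) : VAlg :=
  {| v_car := rs_car X; v_ops := rs_ops X;
     v_bv := fun g f => epsilon (inhabits (rzero (rs_ops X)))
                          (is_sup (rs_ops X) (fun n => rmeet (rs_ops X) (f n) g));
     v_one := rs_unit X |}.

(* Main.v *)
Require Import Defs.
From Stdlib Require Import Reals ClassicalEpsilon FunctionalExtensionality.

Section Theory.
Context {G : Type} (o : RieszOps G) (H : is_riesz o).

Local Infix "⊕" := (radd o) (at level 50, left associativity).
Local Infix "⊓" := (rmeet o) (at level 40, left associativity).
Local Infix "⊔" := (rjoin o) (at level 40, left associativity).
Local Notation "- x" := (ropp o x).
Local Notation "0" := (rzero o).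
Local Infix "≼" := (rle o) (at level 70).

Lemma addA x y z : x ⊕ (y ⊕ z) = x ⊕ y ⊕ z.
Proof. destruct H as [h _]; apply h. Qed.
Lemma addC x y : x ⊕ y = y ⊕ x.
Proof. destruct H as (_&h&_); apply h. Qed.
Lemma add0l x : 0 ⊕ x = x.
Proof. destruct H as (_&_&h&_); apply h. Qed.
Lemma addNr x : x ⊕ - x = 0.
Proof. destruct H as (_&_&_&h&_); apply h. Qed.
Lemma sc_addr a x y : rscal o a (x ⊕ y) = rscal o a x ⊕ rscal o a y.
Proof. destruct H as (_&_&_&_&h&_); apply h. Qed.
Lemma sc_addl a b x : rscal o (a + b) x = rscal o a x ⊕ rscal o b x.
Proof. destruct H as (_&_&_&_&_&h&_); apply h. Qed.
Lemma sc_1 x : rscal o 1 x = x.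
Proof. destruct H as (_&_&_&_&_&_&_&h&_); apply h. Qed.
Lemma meetC x y : x ⊓ y = y ⊓ x.
Proof. destruct H as (_&_&_&_&_&_&_&_&h&_); apply h. Qed.
Lemma joinC x y : x ⊔ y = y ⊔ x.
Proof. destruct H as (_&_&_&_&_&_&_&_&_&h&_); apply h. Qed.
Lemma meetA x y z : x ⊓ (y ⊓ z) = x ⊓ y ⊓ z.
Proof. destruct H as (_&_&_&_&_&_&_&_&_&_&h&_); apply h. Qed.
Lemma joinA x y z : x ⊔ (y ⊔ z) = x ⊔ y ⊔ z.
Proof. destruct H as (_&_&_&_&_&_&_&_&_&_&_&h&_); apply h. Qed.
Lemma meetJ x y : x ⊓ (x ⊔ y) = x.
Proof. destruct H as (_&_&_&_&_&_&_&_&_&_&_&_&h&_); apply h. Qed.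
Lemma joinM x y : x ⊔ (x ⊓ y) = x.
Proof. destruct H as (_&_&_&_&_&_&_&_&_&_&_&_&_&h&_); apply h. Qed.
Lemma le_add x y z : x ≼ y -> x ⊕ z ≼ y ⊕ z.
Proof. destruct H as (_&_&_&_&_&_&_&_&_&_&_&_&_&_&h&_); apply h. Qed.
Lemma le_sc c x y : x ≼ y -> (0 <= c)%R -> rscal o c x ≼ rscal o c y.
Proof. destruct H as (_&_&_&_&_&_&_&_&_&_&_&_&_&_&_&h); apply h. Qed.

Lemma add0r x : x ⊕ 0 = x.
Proof. rewrite addC; apply add0l. Qed.
Lemma addNl x : - x ⊕ x = 0.
Proof. rewrite addC; apply addNr. Qed.
Lemma addKl x y : - x ⊕ (x ⊕ y) = y.
Proof. rewrite addA, addNl; apply add0l. Qed.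
Lemma addKr x y : x ⊕ (- x ⊕ y) = y.
Proof. rewrite addA, addNr; apply add0l. Qed.
Lemma add_cancel x y z : x ⊕ y = x ⊕ z -> y = z.
Proof. intro e. rewrite <- (addKl x y), e; apply addKl. Qed.
Lemma opp_uniq x y : x ⊕ y = 0 -> y = - x.
Proof. intro e. apply (add_cancel x). rewrite e, addNr; reflexivity. Qed.
Lemma oppK x : - - x = x.
Proof. symmetry; apply opp_uniq; apply addNl. Qed.
Lemma oppD x y : - (x ⊕ y) = - x ⊕ - y.
Proof. symmetry; apply opp_uniq.
  rewrite (addC (-x)), addA, <- (addA x), addNr, add0r, addNr; reflexivity. Qed.
Lemma opp0 : - 0 = 0.
Proof. symmetry; apply opp_uniq, add0l. Qed.
Lemma sc0 c : rscal o c 0 = 0.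
Proof. apply (add_cancel (rscal o c 0)). rewrite <- sc_addr, !add0r; reflexivity. Qed.
Lemma sc_0 x : rscal o 0%R x = 0.
Proof. apply (add_cancel (rscal o 0%R x)). rewrite <- sc_addl, Rplus_0_r, add0r; reflexivity. Qed.
Lemma scS k x : rscal o (INR (S k)) x = rscal o (INR k) x ⊕ x.
Proof. rewrite S_INR, sc_addl, sc_1; reflexivity. Qed.

Lemma meetI x : x ⊓ x = x.
Proof. rewrite <- (joinM x x) at 2. apply meetJ. Qed.
Lemma le_refl x : x ≼ x.
Proof. apply meetI. Qed.
Lemma le_antisym x y : x ≼ y -> y ≼ x -> x = y.
Proof. unfold rle; intros a b. transitivity (x ⊓ y); [symmetry; exact a|]. rewrite meetC; exact b. Qed.
Lemma le_trans x y z : x ≼ y -> y ≼ z -> x ≼ z.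
Proof. unfold rle; intros a b. rewrite <- a at 1. rewrite <- meetA, b; exact a. Qed.
Lemma meet_le_l a b : a ⊓ b ≼ a.
Proof. unfold rle. rewrite (meetC a b), <- meetA, meetI; reflexivity. Qed.
Lemma meet_le_r a b : a ⊓ b ≼ b.
Proof. unfold rle. rewrite <- meetA, meetI; reflexivity. Qed.
Lemma meet_glb a b c : c ≼ a -> c ≼ b -> c ≼ a ⊓ b.
Proof. unfold rle; intros x y. rewrite meetA, x, y; reflexivity. Qed.
Lemma le_joinE a b : a ≼ b -> a ⊔ b = b.
Proof. unfold rle; intro e. rewrite <- e, joinC, meetC; apply joinM. Qed.
Lemma joinE_le a b : a ⊔ b = b -> a ≼ b.
Proof. unfold rle; intro e. rewrite <- e; apply meetJ. Qed.
Lemma join_ge_l a b : a ≼ a ⊔ b.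
Proof. apply meetJ. Qed.
Lemma join_ge_r a b : b ≼ a ⊔ b.
Proof. rewrite joinC; apply meetJ. Qed.
Lemma join_lub a b c : a ≼ c -> b ≼ c -> a ⊔ b ≼ c.
Proof. intros x y. apply joinE_le. rewrite <- joinA, (le_joinE _ _ y), (le_joinE _ _ x); reflexivity. Qed.
Lemma meet_mono a b a' b' : a ≼ a' -> b ≼ b' -> a ⊓ b ≼ a' ⊓ b'.
Proof. intros x y. apply meet_glb. apply (le_trans _ a); [apply meet_le_l|exact x].
  apply (le_trans _ b); [apply meet_le_r|exact y]. Qed.
Lemma join_mono a b a' b' : a ≼ a' -> b ≼ b' -> a ⊔ b ≼ a' ⊔ b'.
Proof. intros x y. apply join_lub. apply (le_trans _ a'); [exact x|apply join_ge_l].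
  apply (le_trans _ b'); [exact y|apply join_ge_r]. Qed.
Lemma le_addl x y z : x ≼ y -> z ⊕ x ≼ z ⊕ y.
Proof. intro e; rewrite (addC z x), (addC z y); apply le_add, e. Qed.
Lemma le_add_rev x y z : z ⊕ x ≼ z ⊕ y -> x ≼ y.
Proof. intro e. apply (le_addl _ _ (- z)) in e. rewrite !addKl in e; exact e. Qed.
Lemma le_opp x y : x ≼ y -> - y ≼ - x.
Proof. intro e. apply (le_add _ _ (- x ⊕ - y)) in e.
  rewrite addA, addNr, add0l, (addC (-x)), addA, addNr, add0l in e; exact e. Qed.
Lemma le_add2 a b c d : a ≼ b -> c ≼ d -> a ⊕ c ≼ b ⊕ d.
Proof. intros x y. apply (le_trans _ (b ⊕ c)). apply le_add, x. apply le_addl, y. Qed.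
Lemma meet_addl c a b : c ⊕ (a ⊓ b) = (c ⊕ a) ⊓ (c ⊕ b).
Proof. apply le_antisym.
  - apply meet_glb; apply le_addl; [apply meet_le_l|apply meet_le_r].
  - apply (le_add_rev _ _ (- c)). rewrite addKl. apply meet_glb.
    + rewrite <- (addKl c a) at 2. apply le_addl, meet_le_l.
    + rewrite <- (addKl c b) at 2. apply le_addl, meet_le_r.
Qed.
Lemma join_addl c a b : c ⊕ (a ⊔ b) = (c ⊕ a) ⊔ (c ⊕ b).
Proof. apply le_antisym.
  - apply (le_add_rev _ _ (- c)). rewrite addKl. apply join_lub.
    + rewrite <- (addKl c a) at 1. apply le_addl, join_ge_l.
    + rewrite <- (addKl c b) at 1. apply le_addl, join_ge_r.
  - apply join_lub; apply le_addl; [apply join_ge_l|apply join_ge_r].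
Qed.
Lemma opp_meet a b : - (a ⊓ b) = (- a) ⊔ (- b).
Proof. apply le_antisym.
  - rewrite <- (oppK (-a ⊔ -b)). apply le_opp. apply meet_glb.
    + rewrite <- (oppK a) at 2. apply le_opp, join_ge_l.
    + rewrite <- (oppK b) at 2. apply le_opp, join_ge_r.
  - apply join_lub; apply le_opp; [apply meet_le_l|apply meet_le_r].
Qed.
Lemma sc_nonneg c x : (0 <= c)%R -> 0 ≼ x -> 0 ≼ rscal o c x.
Proof. intros hc hx. rewrite <- (sc0 c). apply le_sc; assumption. Qed.
Lemma le_0_meet x y : 0 ≼ x -> 0 ≼ y -> 0 ≼ x ⊓ y.
Proof. intros; apply meet_glb; assumption. Qed.
Lemma le_0_add x y : 0 ≼ x -> 0 ≼ y -> 0 ≼ x ⊕ y.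
Proof. intros a b. rewrite <- (add0l 0). apply le_add2; assumption. Qed.

Lemma meet_subadd x a b : 0 ≼ x -> 0 ≼ a -> 0 ≼ b -> x ⊓ (a ⊕ b) ≼ x ⊓ a ⊕ x ⊓ b.
Proof. intros hx ha hb. set (w := x ⊓ (a ⊕ b)).
  assert (k : w ⊕ - (x ⊓ a) ≼ x ⊓ b).
  { rewrite opp_meet, join_addl. apply join_lub.
    - assert (h0 : w ⊕ - x ≼ 0).
      { rewrite <- (addNr x). apply le_add, meet_le_l. }
      apply meet_glb; apply (le_trans _ 0); assumption.
    - apply meet_glb.
      + apply (le_trans _ w); [|apply meet_le_l]. rewrite <- (add0r w) at 2. apply le_addl.
        rewrite <- opp0. apply le_opp, ha.
      + rewrite <- (addKl a b), (addC w (- a)). apply le_addl, meet_le_r. }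
  apply (le_add _ _ (x ⊓ a)) in k.
  rewrite <- addA, addNl, add0r in k. rewrite addC; exact k.
Qed.

Lemma disj_mult x y n : 0 ≼ x -> 0 ≼ y -> x ⊓ y = 0 -> x ⊓ rscal o (INR n) y = 0.
Proof. intros hx hy e. induction n.
  - simpl. rewrite sc_0. rewrite meetC; exact hx.
  - apply le_antisym.
    + rewrite scS. apply (le_trans _ (x ⊓ rscal o (INR n) y ⊕ x ⊓ y)).
      apply meet_subadd; try assumption. apply sc_nonneg; [apply pos_INR|exact hy].
      rewrite IHn, e, add0l; apply le_refl.
    + apply le_0_meet; [exact hx|]. apply sc_nonneg; [apply pos_INR|exact hy].
Qed.

Lemma sup_unique f s s' : is_sup o f s -> is_sup o f s' -> s = s'.
Proof. intros [a b] [c d]. apply le_antisym; [apply b, c|apply d, a]. Qed.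


Lemma sup_ext' f g s : (forall n, f n = g n) -> is_sup o g s -> is_sup o f s.
Proof. intros e h. replace f with g; [exact h|]. apply functional_extensionality; intro; symmetry; apply e. Qed.

Lemma arch (hd : dedekind_sigma_complete o) u (hu : weak_unit o u) x :
  is_sup o (fun k => x ⊓ rscal o (INR (S k)) u) x.
Proof.
  destruct hu as [u0 hw].
  destruct (hd (fun k => x ⊓ rscal o (INR (S k)) u)) as [s [sub sl]].
  { exists x; intro; apply meet_le_l. }
  assert (sx : s ≼ x) by (apply sl; intro; apply meet_le_l).
  set (d := x ⊕ - s).
  assert (d0 : 0 ≼ d).
  { unfold d. rewrite <- (addNr s). apply le_add, sx. }
  assert (step : forall k, x ⊓ rscal o (INR (S k)) u ⊕ d ⊓ u ≼ x ⊓ rscal o (INR (S (S k))) u).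
  { intro k. set (t := x ⊓ rscal o (INR (S k)) u).
    apply (le_trans _ (t ⊕ (x ⊕ - t) ⊓ u)).
    - apply le_addl, meet_mono; [|apply le_refl]. unfold d. apply le_addl, le_opp, sub.
    - rewrite meet_addl, (addC x (- t)), addKr, (addC t u). unfold t.
      rewrite meet_addl. apply meet_glb; [apply meet_le_l|].
      apply (le_trans _ (u ⊕ rscal o (INR (S k)) u)).
      + apply (le_trans _ ((u ⊕ x) ⊓ (u ⊕ rscal o (INR (S k)) u))); apply meet_le_r.
      + rewrite (scS (S k)), addC; apply le_refl. }
  assert (du0 : d ⊓ u = 0).
  { apply le_antisym; [|apply le_0_meet; assumption].
    assert (hs : s ≼ s ⊕ - (d ⊓ u)).
    { apply sl. intro k. apply (le_add_rev _ _ (d ⊓ u)).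
      rewrite (addC s), addKr, addC.
      apply (le_trans _ _ _ (step k)), sub. }
    apply (le_add _ _ (d ⊓ u)) in hs. rewrite <- addA, addNl, add0r in hs.
    apply (le_add_rev _ _ s). rewrite add0r. exact hs. }
  apply hw in du0. unfold d in du0.
  assert (xs : s = x).
  { apply opp_uniq in du0. rewrite <- (oppK s), du0, oppK; reflexivity. }
  cut (is_sup o (fun k => x ⊓ rscal o (INR (S k)) u) s); [rewrite xs; auto|split; assumption].
Qed.

Lemma abs_pos x : 0 ≼ x -> rabs o x = x.
Proof. intro h. unfold rabs. rewrite joinC. apply le_joinE.
  apply (le_trans _ 0); [|exact h]. rewrite <- opp0. apply le_opp, h. Qed.

Lemma weak_from_arch u
  (ha : forall x, 0 ≼ x -> is_sup o (fun k => x ⊓ rscal o (INR (S k)) u ⊓ x) x) :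
  weak_unit o u.
Proof.
  set (p := u ⊔ 0). set (m := - u ⊔ 0).
  assert (um : u ⊕ m = p).
  { unfold m, p. rewrite join_addl, addNr, add0r, joinC; reflexivity. }
  assert (pm : m ⊓ p = 0).
  { assert (em : m = p ⊕ - u) by (rewrite <- um, (addC u m), <- addA, addNr, add0r; reflexivity).
    assert (e2 : 0 ⊓ - u = - p).
    { rewrite <- (oppK (0 ⊓ - u)), opp_meet, opp0, oppK, joinC; reflexivity. }
    rewrite meetC, em. rewrite <- (add0r p) at 1. rewrite <- meet_addl, e2, addNr; reflexivity. }
  assert (m0 : 0 ≼ m) by apply join_ge_r.
  assert (p0 : 0 ≼ p) by apply join_ge_r.
  assert (u0 : 0 ≼ u).
  { assert (mz : m = 0).
    { apply le_antisym; [|exact m0]. destruct (ha m m0) as [_ lub]. apply lub.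
      intro k. apply (le_trans _ (m ⊓ rscal o (INR (S k)) u)); [apply meet_le_l|].
      rewrite <- (disj_mult m p (S k) m0 p0 pm). apply meet_mono; [apply le_refl|].
      apply le_sc; [apply join_ge_l|apply pos_INR]. }
    assert (nu : - u ≼ 0) by (rewrite <- mz; apply join_ge_l).
    apply le_opp in nu. rewrite opp0, oppK in nu. exact nu. }
  split; [exact u0|]. intros f e.
  assert (f0 : 0 ≼ f) by (rewrite <- e; apply meet_le_l).
  apply le_antisym; [|exact f0]. destruct (ha f f0) as [_ lub]. apply lub.
  intro k. apply (le_trans _ (f ⊓ rscal o (INR (S k)) u)); [apply meet_le_l|].
  rewrite (disj_mult f u (S k) f0 u0 e). apply le_refl.
Qed.

End Theory.

Lemma mor_zero_opp {G H : Type} (o : RieszOps G) (p : RieszOps H) (Hp : is_riesz p)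
  (h : G -> H) : (forall x y, h (radd o x y) = radd p (h x) (h y)) -> is_riesz o ->
  h (rzero o) = rzero p /\ forall x, h (ropp o x) = ropp p (h x).
Proof. intros ha Ho.
  assert (h0 : h (rzero o) = rzero p).
  { apply (add_cancel p Hp (h (rzero o))). rewrite <- ha, (add0r o Ho), (add0r p Hp); reflexivity. }
  split; [exact h0|]. intro x. apply (opp_uniq p Hp). rewrite <- ha, (addNr o Ho); exact h0. Qed.

Lemma Eu_sup X : is_sRSu X -> forall g f,
  is_sup (rs_ops X) (fun n => rmeet (rs_ops X) (f n) g) (v_bv (Eu X) g f).
Proof. intros (hr&hd&hw) g f. simpl. apply epsilon_spec. apply hd. exists g.
  intro; apply (meet_le_r _ hr). Qed.

Lemma bv_sup A : is_V A -> forall g f,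
  is_sup (v_ops A) (fun n => rmeet (v_ops A) (f n) g) (v_bv A g f).
Proof. intros (hr&h1&h2&h3&h4) g f. split.
  - intro n. revert f. induction n; intro f.
    + rewrite (h2 g f). apply (join_ge_l _ hr).
    + rewrite (h2 g f). eapply (le_trans _ hr); [apply (IHn (fun n => f (S n)))|apply (join_ge_r _ hr)].
  - intros b hb. rewrite h1.
    replace (fun n => rmeet (v_ops A) (f n) g) with (fun n => rmeet (v_ops A) (rmeet (v_ops A) (f n) g) b)
      by (apply functional_extensionality; intro; apply hb).
    apply h3.
Qed.

Theorem mainTheorem4 :
  (forall X : RSu, is_sRSu X -> is_V (Eu X)) /\
  (forall A : VAlg, is_V A -> is_sRSu (Tu A)) /\
  (forall (X Y : RSu) (h : rs_car X -> rs_car Y), is_sRSu X -> is_sRSu Y ->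
     sRSu_mor X Y h -> V_mor (Eu X) (Eu Y) h) /\
  (forall (A B : VAlg) (h : v_car A -> v_car B), is_V A -> is_V B ->
     V_mor A B h -> sRSu_mor (Tu A) (Tu B) h) /\
  (forall X : RSu, is_sRSu X -> Tu (Eu X) = X) /\
  (forall A : VAlg, is_V A -> Eu (Tu A) = A).
Proof.
  split; [|split; [|split; [|split; [|split]]]].
  - intros X hX. pose proof (Eu_sup X hX) as ES. destruct hX as (hr&hd&hw).
    split; [exact hr|]. split; [|split; [|split]].
    + intros g f. apply (sup_unique _ hr (fun n => rmeet (rs_ops X) (f n) g)); [apply ES|].
      eapply (sup_ext' _ _ (fun n => rmeet (rs_ops X) (rmeet (rs_ops X) (f n) g) g)); [|apply ES].
      intro n. simpl. rewrite <- (meetA _ hr), (meetI _ hr); reflexivity.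
    + intros g f. apply (sup_unique _ hr (fun n => rmeet (rs_ops X) (f n) g)); [apply ES|].
      destruct (ES g (fun n => f (S n))) as [ub lub]. split.
      * intro n; destruct n; simpl.
        -- apply (join_ge_l _ hr).
        -- eapply (le_trans _ hr); [apply (ub n)|apply (join_ge_r _ hr)].
      * intros b hb. apply (join_lub _ hr); [apply (hb 0%nat)|]. apply lub. intro n; apply (hb (S n)).
    + intros g f h. destruct (ES g (fun n => rmeet (rs_ops X) (f n) h)) as [_ lub]. apply lub.
      intro n. eapply (le_trans _ hr); [apply (meet_le_l _ hr)|apply (meet_le_r _ hr)].
    + intro f. simpl. apply (sup_unique _ hr _ _ _ (ES _ _)).
      eapply (sup_ext' _); [|apply (arch _ hr hd _ hw)].
      intro n; simpl. rewrite (meetC _ hr), (meetA _ hr), (meetI _ hr); reflexivity.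
  - intros A hA. pose proof (bv_sup A hA) as BS. destruct hA as (hr&h1&h2&h3&h4).
    unfold is_sRSu; simpl. split; [exact hr|split].
    + intros f [b hb]. exists (v_bv A b f). eapply (sup_ext' _); [|apply BS].
      intro n; symmetry; apply hb.
    + apply (weak_from_arch _ hr). intros x x0. pose proof (BS (rabs (v_ops A) x)
        (fun k => rmeet (v_ops A) (rabs (v_ops A) x) (rscal (v_ops A) (INR (S k)) (v_one A)))) as K.
      rewrite h4, (abs_pos _ hr x x0) in K. exact K.
  - intros X Y h hX hY (hm&hs&hu). pose proof (Eu_sup X hX) as EX. pose proof (Eu_sup Y hY) as EY.
    destruct hX as (hrX&_&_). destruct hY as (hrY&_&_).
    destruct (mor_zero_opp _ _ hrY h (proj1 hm) hrX) as [h0 hn].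
    split; [exact hm|]. split; [exact hn|]. split; [exact h0|]. split; [|exact hu].
    intros g f. apply (sup_unique _ hrY (fun n => rmeet (rs_ops Y) (h (f n)) (h g))); [|apply EY].
    eapply (sup_ext' _); [|apply (hs _ _ (EX g f))].
    intro n; simpl. destruct hm as (_&_&hme&_). rewrite hme; reflexivity.
  - intros A B h hA hB (hm&hn&h0&hb&hu). pose proof (bv_sup A hA) as BA. pose proof (bv_sup B hB) as BB.
    destruct hA as (hrA&_). unfold sRSu_mor; simpl. split; [exact hm|split; [|exact hu]].
    intros f s hsup. pose proof hsup as [ub lub].
    assert (e : v_bv A s f = s).
    { apply (sup_unique _ hrA (fun n => rmeet (v_ops A) (f n) s)); [apply BA|].
      eapply (sup_ext' _); [|apply hsup]. intro n; apply ub. }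
    assert (hs : h s = v_bv B (h s) (fun n => h (f n))) by (rewrite <- (hb s f), e; reflexivity).
    rewrite hs. eapply (sup_ext' _); [|apply BB].
    intro n; simpl. destruct hm as (_&_&hme&_). rewrite <- hme, (ub n); reflexivity.
  - intros [c o u] _. reflexivity.
  - intros A hA. pose proof (bv_sup A hA) as BA. destruct hA as (hr&_).
    destruct A as [c o bv one]. unfold Eu, Tu; simpl in *. f_equal.
    apply functional_extensionality; intro g; apply functional_extensionality; intro f.
    apply (sup_unique _ hr (fun n => rmeet o (f n) g)); [|apply BA].
    apply epsilon_spec. exists (bv g f); apply BA.
Qed.
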